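(* Let $H\in(\tfrac12,1)$, $\beta\in(1-2H,1]$, $\tau=T/M$, $t_i=i\tau$, and fix $m\in\{1,\dots,M\}$. For $u\in[t_i,t_{i+1})$ set $\mathcal S_N(u,t_i):=E_N(t_m-u)-E_N(t_m-t_i)$. Then there is a constant $C$ independent of $N,M,m$ and $x$ such that for all $x\in V$, $$\sum_{i,j=0}^{m-1}\int_{t_j}^{t_{j+1}}\int_{t_i}^{t_{i+1}}\big\langle\mathcal S_N(u,t_i)P_Nx,\;\mathcal S_N(v,t_j)P_Nx\big\rangle\,\phi(u-v)\,\mathrm du\,\mathrm dv\le C\,\tau^{2H+\beta-1}\|A_N^{\frac{\beta-1}{2}}P_Nx\|^2 .$$
   Context: $(V,\langle\cdot,\cdot\rangle,\|\cdot\|)$ is a real separable Hilbert space; $A$ is a linear, densely defined, positive self-adjoint unbounded operator with compact inverse, orthonormal eigenbasis $(e_i)$, $Ae_i=\lambda_ie_i$, $0<\lambda_1\le\lambda_2\le\dots\to\infty$. $P_N$ is the orthogonal projection onto $\mathrm{span}\{e_1,\dots,e_N\}$, $A_N=AP_N$ (with fractional powers taken on $\mathrm{span}\{e_1,\dots,e_N\}$), $E_N(t)=e^{-tA_N}$. $\phi(y)=H(2H-1)|y|^{2H-2}$. *)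

(* Defs.v *)
From Stdlib Require Import Reals Lra Lia ClassicalEpsilon.
Open Scope R_scope.

Record Hilbert := {
  V :> Type;
  vzero : V;
  vadd : V -> V -> V;
  vopp : V -> V;
  vscale : R -> V -> V;
  inner : V -> V -> R;
  vadd_assoc : forall x y z, vadd x (vadd y z) = vadd (vadd x y) z;
  vadd_comm : forall x y, vadd x y = vadd y x;
  vadd_0 : forall x, vadd x vzero = x;
  vadd_opp : forall x, vadd x (vopp x) = vzero;
  vscale_assoc : forall a b x, vscale a (vscale b x) = vscale (a * b) x;
  vscale_1 : forall x, vscale 1 x = x;
  vscale_distr_v : forall a x y, vscale a (vadd x y) = vadd (vscale a x) (vscale a y);
  vscale_distr_s : forall a b x, vscale (a + b) x = vadd (vscale a x) (vscale b x);
  inner_sym : forall x y, inner x y = inner y x;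
  inner_add_l : forall x y z, inner (vadd x y) z = inner x z + inner y z;
  inner_scale_l : forall a x y, inner (vscale a x) y = a * inner x y;
  inner_pos : forall x, 0 <= inner x x;
  inner_def : forall x, inner x x = 0 -> x = vzero;
  complete : forall u : nat -> V,
    (forall eps, eps > 0 -> exists N, forall n p, (n >= N)%nat -> (p >= N)%nat ->
        sqrt (inner (vadd (u n) (vopp (u p))) (vadd (u n) (vopp (u p)))) < eps) ->
    exists l, Un_cv (fun n => sqrt (inner (vadd (u n) (vopp l)) (vadd (u n) (vopp l)))) 0
}.

Arguments vzero {h}. Arguments vadd {h}. Arguments vopp {h}.
Arguments vscale {h}. Arguments inner {h}.

Definition vnorm {Vh : Hilbert} (x : Vh) : R := sqrt (inner x x).

Fixpoint vsum {Vh : Hilbert} (f : nat -> Vh) (n : nat) : Vh :=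
  match n with
  | O => vzero
  | S k => vadd (vsum f k) (f k)
  end.

Fixpoint rsum (f : nat -> R) (n : nat) : R :=
  match n with
  | O => 0
  | S k => rsum f k + f k
  end.

(** Spectral data of A: orthonormal eigenbasis e (0-indexed: e 0, e 1, ...)
    which is total in V (hence V separable), with eigenvalues
    0 < lam 0 <= lam 1 <= ... -> +oo.  (A e_k = lam k e_k; A is the
    positive self-adjoint operator with compact inverse determined by these.) *)
Record SpectralData (Vh : Hilbert) := {
  e : nat -> Vh;
  lam : nat -> R;
  e_orthonormal : forall i j, inner (e i) (e j) = if Nat.eq_dec i j then 1 else 0;
  lam_pos : forall i, 0 < lam i;
  lam_mono : forall i j, (i <= j)%nat -> lam i <= lam j;
  lam_unbounded : forall K, exists i, K < lam i;
  e_total : forall x : Vh,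
    Un_cv (fun N => vnorm (vadd x (vopp (vsum (fun k => vscale (inner x (e k)) (e k)) N)))) 0
}.

Arguments e {Vh}. Arguments lam {Vh}.

Definition PN {Vh : Hilbert} (S : SpectralData Vh) (N : nat) (x : Vh) : Vh :=
  vsum (fun k => vscale (inner x (e S k)) (e S k)) N.

(** A_N^s on span{e_0..e_{N-1}} (fractional power via spectral calculus),
    extended by P_N:  A_N^s x = sum_{k<N} lam_k^s <x,e_k> e_k *)
Definition AN_pow {Vh : Hilbert} (S : SpectralData Vh) (N : nat) (s : R) (x : Vh) : Vh :=
  vsum (fun k => vscale (Rpower (lam S k) s * inner x (e S k)) (e S k)) N.

(** E_N(t) = exp(-t A_N), applied to elements of span{e_0..e_{N-1}}:
    E_N(t) y = sum_{k<N} exp(-t lam_k) <y,e_k> e_k  (agrees with e^{-tA_N} on P_N V). *)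
Definition EN {Vh : Hilbert} (S : SpectralData Vh) (N : nat) (t : R) (y : Vh) : Vh :=
  vsum (fun k => vscale (exp (- t * lam S k) * inner y (e S k)) (e S k)) N.

Definition SN {Vh : Hilbert} (S : SpectralData Vh) (N : nat) (tm u s : R) (y : Vh) : Vh :=
  vadd (EN S N (tm - u) y) (vopp (EN S N (tm - s) y)).

(** phi(y) = H(2H-1)|y|^{2H-2} (only used for y <> 0) *)
Definition phi (H y : R) : R := H * (2 * H - 1) * Rpower (Rabs y) (2 * H - 2).

(** Total Riemann integral: RiemannInt if f is Riemann integrable on [a,b], else 0. *)
Definition RInt (f : R -> R) (a b : R) : R :=
  match excluded_middle_informative (inhabited (Riemann_integrable f a b)) with
  | left h => RiemannInt (epsilon h (fun _ => True))
  | right _ => 0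
  end.

Definition cutoff (delta y : R) : R := if Rle_dec delta (Rabs y) then 1 else 0.

(* Main.v *)
From Coquelicot Require Import Coquelicot.
From Stdlib Require Import Reals Lra Lia ClassicalEpsilon.
Require Import Defs.
Open Scope R_scope.


Lemma inner_zero_l {Vh : Hilbert} (z : Vh) : inner vzero z = 0.
Proof.
  pose proof (inner_add_l Vh vzero vzero z) as Hh.
  rewrite vadd_0 in Hh. lra.
Qed.

Lemma inner_opp_l {Vh : Hilbert} (a z : Vh) : inner (vopp a) z = - inner a z.
Proof.
  pose proof (inner_add_l Vh a (vopp a) z) as Hh.
  rewrite vadd_opp, inner_zero_l in Hh. lra.
Qed.

Lemma inner_vsum_l {Vh : Hilbert} (f : nat -> Vh) n z :
  inner (vsum f n) z = rsum (fun k => inner (f k) z) n.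
Proof.
  induction n; simpl. apply inner_zero_l.
  rewrite inner_add_l, IHn. reflexivity.
Qed.

Lemma rsum_ext_lt (f g : nat -> R) n :
  (forall k, (k < n)%nat -> f k = g k) -> rsum f n = rsum g n.
Proof.
  induction n; intros Hfg; simpl. reflexivity.
  rewrite IHn by (intros; apply Hfg; lia). rewrite Hfg by lia. reflexivity.
Qed.

Lemma rsum_zero n : rsum (fun _ => 0) n = 0.
Proof. induction n; simpl; lra. Qed.

Lemma inner_combo_e {Vh : Hilbert} (Sd : SpectralData Vh) (c : nat -> R) n k :
  inner (vsum (fun l => vscale (c l) (e Sd l)) n) (e Sd k) =
  if Compare_dec.lt_dec k n then c k else 0.
Proof.
  rewrite inner_vsum_l.
  induction n; simpl. 
  - destruct (Compare_dec.lt_dec k 0); [lia|reflexivity].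
  - rewrite IHn, inner_scale_l, e_orthonormal.
    destruct (Nat.eq_dec n k) as [->|Hne].
    + destruct (Compare_dec.lt_dec k k); [lia|]. destruct (Compare_dec.lt_dec k (S k)); [lra|lia].
    + destruct (Compare_dec.lt_dec k n); destruct (Compare_dec.lt_dec k (S n)); try lia; lra.
Qed.

Lemma inner_combo {Vh : Hilbert} (Sd : SpectralData Vh) (b d : nat -> R) n :
  inner (vsum (fun l => vscale (b l) (e Sd l)) n) (vsum (fun l => vscale (d l) (e Sd l)) n)
  = rsum (fun k => b k * d k) n.
Proof.
  rewrite inner_vsum_l. apply rsum_ext_lt. intros k Hk.
  rewrite inner_scale_l, inner_sym, inner_combo_e.
  destruct (Compare_dec.lt_dec k n); [reflexivity|lia].
Qed.

Lemma rsum_plus (f g : nat -> R) n : rsum (fun k => f k + g k) n = rsum f n + rsum g n.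
Proof. induction n; simpl; lra. Qed.
Lemma rsum_opp (f : nat -> R) n : rsum (fun k => - f k) n = - rsum f n.
Proof. induction n; simpl; lra. Qed.
Lemma rsum_scal (c : R) (f : nat -> R) n : rsum (fun k => c * f k) n = c * rsum f n.
Proof. induction n; simpl; lra. Qed.
Lemma rsum_le (f g : nat -> R) n :
  (forall k, (k < n)%nat -> f k <= g k) -> rsum f n <= rsum g n.
Proof.
  induction n; intros Hfg; simpl. lra.
  pose proof (Hfg n ltac:(lia)). assert (rsum f n <= rsum g n) by (apply IHn; intros; apply Hfg; lia). lra.
Qed.
Lemma rsum_swap (f : nat -> nat -> R) n m :
  rsum (fun i => rsum (fun k => f i k) m) n = rsum (fun k => rsum (fun i => f i k) n) m.
Proof.
  induction n; simpl. symmetry; apply rsum_zero.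
  rewrite IHn, <- rsum_plus. reflexivity.
Qed.
Lemma rsum_telescope (F : nat -> R) n : rsum (fun i => F (S i) - F i) n = F n - F O.
Proof. induction n; simpl; lra. Qed.

Lemma inner_SN {Vh : Hilbert} (Sd : SpectralData Vh) N tm u s v r (y : Vh) :
  inner (SN Sd N tm u s y) (SN Sd N tm v r y) =
  rsum (fun k => (exp (- (tm - u) * lam Sd k) - exp (- (tm - s) * lam Sd k)) *
                 (exp (- (tm - v) * lam Sd k) - exp (- (tm - r) * lam Sd k)) *
                 (inner y (e Sd k) * inner y (e Sd k))) N.
Proof.
  unfold SN, EN.
  rewrite !inner_add_l, !inner_opp_l.
  rewrite !(inner_sym _ _ (vadd _ _)), !inner_add_l, !inner_opp_l.
  rewrite !inner_combo.
  repeat (rewrite <- rsum_opp || rewrite <- rsum_plus). apply rsum_ext_lt. intros; ring.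
Qed.

Lemma inner_ANpow {Vh : Hilbert} (Sd : SpectralData Vh) N s (y : Vh) :
  inner (AN_pow Sd N s y) (AN_pow Sd N s y) =
  rsum (fun k => (Rpower (lam Sd k) s * inner y (e Sd k)) * (Rpower (lam Sd k) s * inner y (e Sd k))) N.
Proof. unfold AN_pow. apply inner_combo. Qed.

Notation CI := Coquelicot.RInt.RInt.

Definition Mx (d s : R) := (Rabs s + d + Rabs (Rabs s - d)) / 2.
Definition Rf (l d p s : R) := exp (- (l * Rabs s) / 2) * Rpower (Mx d s) p.
Definition Psi l d p x := CI (Rf l d p) 0 x.

Lemma Mx_ge_d d s : d <= Mx d s.
Proof. unfold Mx. set (a := Rabs s) in *. unfold Rabs; destruct Rcase_abs; lra. Qed.
Lemma Mx_ge_abs d s : Rabs s <= Mx d s.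
Proof. unfold Mx. set (a := Rabs s) in *. unfold Rabs; destruct Rcase_abs; lra. Qed.
Lemma Mx_eq_abs d s : d <= Rabs s -> Mx d s = Rabs s.
Proof. intros. unfold Mx. set (a := Rabs s) in *. unfold Rabs; destruct Rcase_abs; lra. Qed.
Lemma Mx_eq_d d s : Rabs s <= d -> Mx d s = d.
Proof. intros. unfold Mx. set (a := Rabs s) in *. unfold Rabs; destruct Rcase_abs; lra. Qed.

Lemma cR_mult (f g : R -> R) x : continuous f x -> continuous g x -> continuous (fun y => f y * g y) x.
Proof. intros. apply (@continuous_mult R_UniformSpace R_AbsRing); auto. Qed.
Lemma cR_plus (f g : R -> R) x : continuous f x -> continuous g x -> continuous (fun y => f y + g y) x.
Proof. intros. apply (@continuous_plus R_UniformSpace R_AbsRing R_NormedModule); auto. Qed.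
Lemma cR_minus (f g : R -> R) x : continuous f x -> continuous g x -> continuous (fun y => f y - g y) x.
Proof. intros. apply (@continuous_minus R_UniformSpace R_AbsRing R_NormedModule); auto. Qed.
Lemma cR_opp (f : R -> R) x : continuous f x -> continuous (fun y => - f y) x.
Proof. intros. apply (@continuous_opp R_UniformSpace R_AbsRing R_NormedModule); auto. Qed.
Lemma cR_comp (f g : R -> R) x : continuous f x -> continuous g (f x) -> continuous (fun y => g (f y)) x.
Proof. intros. apply (@continuous_comp R_UniformSpace R_UniformSpace R_UniformSpace); auto. Qed.
Lemma cR_const (c x : R) : continuous (fun _ => c) x.
Proof. apply (@continuous_const R_UniformSpace R_UniformSpace). Qed.
Lemma cR_id (x : R) : continuous (fun y => y) x.
Proof. apply (@continuous_id R_UniformSpace). Qed.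

Lemma Mx_cont d s : continuous (Mx d) s.
Proof.
  unfold Mx.
  apply (continuous_ext (fun s => (Rabs s + d + Rabs (Rabs s - d)) * / 2)).
  { intros; reflexivity. }
  apply cR_mult; [|apply cR_const].
  apply cR_plus. apply cR_plus. apply continuous_Rabs. apply cR_const.
  apply cR_comp with (f := fun s => Rabs s - d) (g := Rabs); [|apply continuous_Rabs].
  apply cR_minus. apply continuous_Rabs. apply cR_const.
Qed.

Lemma Rf_cont l d p s : 0 < d -> continuous (Rf l d p) s.
Proof.
  intros Hd. unfold Rf, Rpower.
  apply cR_mult.
  - apply cR_comp with (f := fun s => - (l * Rabs s) / 2) (g := exp); [|apply continuous_exp].
    apply (continuous_ext (fun s => (- (l * Rabs s)) * / 2)). { intros; reflexivity. }
    apply cR_mult; [|apply cR_const].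
    apply cR_opp. apply cR_mult. apply cR_const. apply continuous_Rabs.
  - apply cR_comp with (f := fun s => p * ln (Mx d s)) (g := exp); [|apply continuous_exp].
    apply cR_mult. apply cR_const.
    apply cR_comp with (f := Mx d) (g := ln). apply Mx_cont.
    apply continuous_ln. pose proof (Mx_ge_d d s). lra.
Qed.

Lemma exp_le x y : x <= y -> exp x <= exp y.
Proof. intros [H|H]. left; apply exp_increasing; auto. subst; lra. Qed.

Lemma Rpower_pos a p : 0 < Rpower a p.
Proof. apply exp_pos. Qed.

Lemma Rpower_decr a b p : p < 0 -> 0 < a <= b -> Rpower b p <= Rpower a p.
Proof.
  intros Hp [Ha Hab]. unfold Rpower. apply exp_le.
  pose proof (ln_le a b Ha Hab). nra.
Qed.

Lemma Rf_pos l d p s : 0 < Rf l d p s.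
Proof. unfold Rf. pose proof (exp_pos (- (l * Rabs s) / 2)). pose proof (Rpower_pos (Mx d s) p). nra. Qed.

Lemma Rf_even l d p s : Rf l d p (- s) = Rf l d p s.
Proof. unfold Rf, Mx. rewrite Rabs_Ropp. reflexivity. Qed.

Lemma exRf l d p a b : 0 < d -> ex_RInt (Rf l d p) a b.
Proof. intros. apply (@ex_RInt_continuous R_CompleteNormedModule). intros. apply Rf_cont; auto. Qed.

Lemma Psi_derive l d p x : 0 < d -> is_derive (Psi l d p) x (Rf l d p x).
Proof.
  intros Hd. unfold Psi. apply is_derive_RInt with (a := 0).
  - apply filter_forall. intros b. apply RInt_correct. apply exRf; auto.
  - apply Rf_cont; auto.
Qed.

Lemma Psi_cont l d p x : 0 < d -> continuous (Psi l d p) x.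
Proof.
  intros Hd. apply (@ex_derive_continuous R_AbsRing R_NormedModule). eexists. apply Psi_derive; auto.
Qed.

Lemma Psi_diff l d p a b : 0 < d -> Psi l d p b - Psi l d p a = CI (Rf l d p) a b.
Proof.
  intros Hd. unfold Psi.
  rewrite <- (RInt_Chasles (Rf l d p) 0 a b) by (apply exRf; auto).
  change (plus (CI (Rf l d p) 0 a) (CI (Rf l d p) a b)) with (CI (Rf l d p) 0 a + CI (Rf l d p) a b).
  ring.
Qed.

Lemma Psi_odd l d p x : 0 < d -> Psi l d p (- x) = - Psi l d p x.
Proof.
  intros Hd. unfold Psi.
  pose proof (RInt_comp_lin (Rf l d p) (-1) 0 0 x (exRf l d p _ _ Hd)) as Hc.
  replace (-1 * 0 + 0) with 0 in Hc by ring.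
  replace (-1 * x + 0) with (- x) in Hc by ring.
  rewrite <- Hc.
  rewrite (RInt_ext _ (fun y => opp (Rf l d p y))).
  2:{ intros y _. replace (-1 * y + 0) with (- y) by ring. rewrite Rf_even.
      rewrite <- (scal_opp_one (K:=R_Ring) (V:=R_ModuleSpace)). reflexivity. }
  rewrite (RInt_opp (V:=R_CompleteNormedModule)) by (apply exRf; auto). reflexivity.
Qed.

Lemma exp_int1 l a b : 0 < l -> 0 <= a <= b -> CI (fun s => exp (- (l * s) / 2)) a b <= 2 / l.
Proof.
  intros Hl [Ha Hab].
  assert (Hi : is_RInt (fun s => exp (- (l * s) / 2)) a b
     (minus ((fun s => - (2 / l) * exp (- (l * s) / 2)) b) ((fun s => - (2 / l) * exp (- (l * s) / 2)) a))).
  { apply (@is_RInt_derive R_CompleteNormedModule (fun s => - (2 / l) * exp (- (l * s) / 2)) (fun s => exp (- (l * s) / 2))).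
    - intros x _. auto_derive. trivial. unfold Rdiv. field. lra.
    - intros x _. apply cR_comp with (f := fun s => - (l * s) / 2) (g := exp); [|apply continuous_exp].
      apply (continuous_ext (fun s => (- (l * s)) * / 2)). { intros; reflexivity. }
      apply cR_mult; [|apply cR_const]. apply cR_opp. apply cR_mult. apply cR_const. apply cR_id. }
  rewrite (is_RInt_unique _ _ _ _ Hi).
  change (minus ?x ?y) with (x - y).
  pose proof (exp_pos (- (l * b) / 2)).
  assert (exp (- (l * a) / 2) <= 1) by (rewrite <- exp_0; apply exp_le; nra).
  assert (0 < 2 / l) by (apply Rdiv_lt_0_compat; lra).
  nra.
Qed.

Lemma exp_int2 l c a b : 0 < l -> a <= b <= c -> CI (fun v => exp (- (l * (c - v)) / 2)) a b <= 2 / l.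
Proof.
  intros Hl [Hab Hbc].
  assert (Hi : is_RInt (fun v => exp (- (l * (c - v)) / 2)) a b
     (minus ((fun v => (2 / l) * exp (- (l * (c - v)) / 2)) b) ((fun v => (2 / l) * exp (- (l * (c - v)) / 2)) a))).
  { apply (@is_RInt_derive R_CompleteNormedModule (fun v => (2 / l) * exp (- (l * (c - v)) / 2)) (fun v => exp (- (l * (c - v)) / 2))).
    - intros x _. auto_derive. trivial. replace (c + - x) with (c - x) by ring. unfold Rdiv. field. lra.
    - intros x _. apply cR_comp with (f := fun s => - (l * (c - s)) / 2) (g := exp); [|apply continuous_exp].
      apply (continuous_ext (fun s => (- (l * (c - s))) * / 2)). { intros; reflexivity. }
      apply cR_mult; [|apply cR_const]. apply cR_opp. apply cR_mult. apply cR_const.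
      apply cR_minus. apply cR_const. apply cR_id. }
  rewrite (is_RInt_unique _ _ _ _ Hi).
  change (minus ?x ?y) with (x - y).
  pose proof (exp_pos (- (l * (c - a)) / 2)).
  assert (exp (- (l * (c - b)) / 2) <= 1) by (rewrite <- exp_0; apply exp_le; nra).
  assert (0 < 2 / l) by (apply Rdiv_lt_0_compat; lra).
  nra.
Qed.

Definition Qf d p s := Rpower (Mx d s) p.

Lemma Qf_cont d p s : 0 < d -> continuous (Qf d p) s.
Proof.
  intros Hd. unfold Qf, Rpower.
  apply cR_comp with (f := fun s => p * ln (Mx d s)) (g := exp); [|apply continuous_exp].
  apply cR_mult. apply cR_const.
  apply cR_comp with (f := Mx d) (g := ln). apply Mx_cont.
  apply continuous_ln. pose proof (Mx_ge_d d s). lra.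
Qed.

Lemma exQf d p a b : 0 < d -> ex_RInt (Qf d p) a b.
Proof. intros. apply (@ex_RInt_continuous R_CompleteNormedModule). intros. apply Qf_cont; auto. Qed.

Lemma pow_cont p s : 0 < s -> continuous (fun s => Rpower s p) s.
Proof.
  intros Hs. unfold Rpower.
  apply cR_comp with (f := fun s => p * ln s) (g := exp); [|apply continuous_exp].
  apply cR_mult. apply cR_const. apply continuous_ln. auto.
Qed.

Lemma pow_int p a b : -1 < p -> 0 < a <= b ->
  CI (fun s => Rpower s p) a b = (Rpower b (p + 1) - Rpower a (p + 1)) / (p + 1).
Proof.
  intros Hp [Ha Hab].
  assert (Hi : is_RInt (fun s => Rpower s p) a b
     (minus ((fun s => / (p + 1) * Rpower s (p + 1)) b) ((fun s => / (p + 1) * Rpower s (p + 1)) a))).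
  { apply (@is_RInt_derive R_CompleteNormedModule (fun s => / (p + 1) * Rpower s (p + 1)) (fun s => Rpower s p)).
    - intros x Hx. rewrite Rmin_left in Hx by lra. rewrite Rmax_right in Hx by lra.
      apply is_derive_Reals.
      replace (Rpower x p) with (/ (p + 1) * ((p + 1) * Rpower x (p + 1 - 1))).
      2:{ replace (p + 1 - 1) with p by ring. field. lra. }
      apply (derivable_pt_lim_scal (fun s => Rpower s (p + 1))). apply derivable_pt_lim_power. lra.
    - intros x Hx. rewrite Rmin_left in Hx by lra. apply pow_cont. lra. }
  rewrite (is_RInt_unique _ _ _ _ Hi).
  change ((/ (p+1) * Rpower b (p+1)) - (/ (p+1) * Rpower a (p+1)) = (Rpower b (p + 1) - Rpower a (p + 1)) / (p + 1)). field. lra.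
Qed.

Lemma Rpower_succ r p : 0 < r -> r * Rpower r p = Rpower r (p + 1).
Proof. intros. rewrite Rpower_plus, Rpower_1 by auto. ring. Qed.

Lemma CI_const_R (c a b : R) : CI (fun _ => c) a b = (b - a) * c.
Proof. rewrite (RInt_const (V:=R_CompleteNormedModule)). reflexivity. Qed.

Lemma CI_chasles (f : R -> R) a b c : ex_RInt f a b -> ex_RInt f b c ->
  CI f a c = CI f a b + CI f b c.
Proof. intros. rewrite <- (RInt_Chasles f a b c) by auto. reflexivity. Qed.

Lemma Q_int d p r : 0 < d -> -1 < p < 0 -> 0 < r ->
  CI (Qf d p) 0 r <= Rpower r (p + 1) * (1 + / (p + 1)).
Proof.
  intros Hd Hp Hr.
  assert (Hq : 0 < / (p + 1)) by (apply Rinv_0_lt_compat; lra).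
  pose proof (Rpower_pos r (p + 1)) as Hrp.
  destruct (Rle_lt_dec r d) as [Hrd|Hdr].
  - rewrite (RInt_ext _ (fun _ => Rpower d p)).
    2:{ intros x Hx. rewrite Rmin_left in Hx by lra. rewrite Rmax_right in Hx by lra.
        unfold Qf. rewrite Mx_eq_d; [reflexivity|]. rewrite Rabs_right; lra. }
    rewrite CI_const_R.
    assert (Rpower d p <= Rpower r p) by (apply Rpower_decr; lra).
    rewrite <- Rpower_succ by lra.
    assert (0 < r * Rpower r p) by (pose proof (Rpower_pos r p); nra).
    assert (0 <= r * Rpower r p * / (p + 1)) by nra.
    nra.
  - rewrite (CI_chasles _ 0 d r) by (apply exQf; auto).
    rewrite (RInt_ext (Qf d p) (fun _ => Rpower d p) 0 d).
    2:{ intros x Hx. rewrite Rmin_left in Hx by lra. rewrite Rmax_right in Hx by lra.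
        unfold Qf. rewrite Mx_eq_d; [reflexivity|]. rewrite Rabs_right; lra. }
    rewrite (RInt_ext (Qf d p) (fun s => Rpower s p) d r).
    2:{ intros x Hx. rewrite Rmin_left in Hx by lra. rewrite Rmax_right in Hx by lra.
        unfold Qf. rewrite Mx_eq_abs; rewrite Rabs_right; try lra; reflexivity. }
    rewrite CI_const_R, pow_int by lra.
    replace ((d - 0) * Rpower d p) with (Rpower d (p + 1)) by (rewrite <- Rpower_succ by lra; ring).
    assert (Rpower d (p + 1) <= Rpower r (p + 1)) by (apply Rle_Rpower_l; lra).
    pose proof (Rpower_pos d (p + 1)).
    unfold Rdiv. nra.
Qed.

Lemma CI_scal_R (f : R -> R) c a b : ex_RInt f a b -> CI (fun x => c * f x) a b = c * CI f a b.
Proof. intros H. exact (RInt_scal f a b c H). Qed.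

Lemma expl_cont l s : continuous (fun s => exp (- (l * s) / 2)) s.
Proof.
  apply cR_comp with (f := fun s => - (l * s) / 2) (g := exp); [|apply continuous_exp].
  apply (continuous_ext (fun s => (- (l * s)) * / 2)). { intros; reflexivity. }
  apply cR_mult; [|apply cR_const]. apply cR_opp. apply cR_mult. apply cR_const. apply cR_id.
Qed.

Lemma Rf_le_Qf l d p s : 0 < l -> Rf l d p s <= Qf d p s.
Proof.
  intros Hl. unfold Rf, Qf. pose proof (Rpower_pos (Mx d s) p).
  assert (exp (- (l * Rabs s) / 2) <= 1).
  { rewrite <- exp_0. apply exp_le. pose proof (Rabs_pos s). nra. }
  nra.
Qed.

Definition Bnd l p := Rpower (/ l) (p + 1) * (3 + / (p + 1)).

Lemma Psi_bound l d p x : 0 < l -> 0 < d -> -1 < p < 0 -> 0 <= x -> Psi l d p x <= Bnd l p.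
Proof.
  intros Hl Hd Hp Hx. unfold Psi, Bnd.
  set (r := / l).
  assert (Hr : 0 < r) by (apply Rinv_0_lt_compat; lra).
  assert (Hq : 0 < / (p + 1)) by (apply Rinv_0_lt_compat; lra).
  pose proof (Rpower_pos r (p + 1)) as Hrp.
  pose proof (Q_int d p r Hd Hp Hr) as HQ.
  destruct (Rle_lt_dec x r) as [Hxr|Hxr].
  - assert (H1 : CI (Rf l d p) 0 x <= CI (Qf d p) 0 x).
    { apply RInt_le; auto. apply exRf; auto. apply exQf; auto. intros; apply Rf_le_Qf; auto. }
    assert (H2 : 0 <= CI (Qf d p) x r).
    { apply RInt_ge_0; auto. apply exQf; auto. intros; left; apply Rpower_pos. }
    rewrite (CI_chasles _ 0 x r) in HQ by (apply exQf; auto).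
    nra.
  - rewrite (CI_chasles _ 0 r x) by (apply exRf; auto).
    assert (H1 : CI (Rf l d p) 0 r <= CI (Qf d p) 0 r).
    { apply RInt_le; auto; try lra. apply exRf; auto. apply exQf; auto. intros; apply Rf_le_Qf; auto. }
    assert (Hex : ex_RInt (fun s => exp (- (l * s) / 2)) r x).
    { apply (@ex_RInt_continuous R_CompleteNormedModule). intros. apply expl_cont. }
    assert (H2 : CI (Rf l d p) r x <= CI (fun s => Rpower r p * exp (- (l * s) / 2)) r x).
    { apply RInt_le; try lra. apply exRf; auto.
      apply (ex_RInt_scal (V:=R_NormedModule) _ r x (Rpower r p)) in Hex. exact Hex.
      intros s Hs. unfold Rf. rewrite (Rabs_right s) by lra.
      pose proof (Mx_ge_abs d s). rewrite (Rabs_right s) in H by lra.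
      assert (Rpower (Mx d s) p <= Rpower r p) by (apply Rpower_decr; lra).
      pose proof (exp_pos (- (l * s) / 2)). nra. }
    rewrite CI_scal_R in H2 by auto.
    pose proof (exp_int1 l r x Hl ltac:(lra)) as H3.
    assert (Hrl : 2 / l = 2 * r) by (unfold r, Rdiv; ring).
    rewrite Hrl in H3.
    pose proof (Rpower_pos r p).
    assert (Rpower r p * CI (fun s => exp (- (l * s) / 2)) r x <= Rpower r p * (2 * r)) by (apply Rmult_le_compat_l; lra).
    rewrite <- Rpower_succ in * by lra.
    assert (0 < r * Rpower r p) by nra.
    assert (0 <= r * Rpower r p * / (p + 1)) by nra.
    nra.
Qed.

Lemma g_bounds tm ti u l tau : 0 < l -> 0 < tau -> ti <= u <= ti + tau -> u <= tm ->
  0 <= exp (- (tm - u) * l) - exp (- (tm - ti) * l) <= Rmin 1 (l * tau) * exp (- (tm - u) * l).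
Proof.
  intros Hl Ht [H1 H2] H3.
  replace (- (tm - ti) * l) with (- (tm - u) * l + - ((u - ti) * l)) by ring.
  rewrite exp_plus.
  set (A := exp (- (tm - u) * l)). pose proof (exp_pos (- (tm - u) * l)) as HA. fold A in HA.
  pose proof (exp_ineq1_le (- ((u - ti) * l))) as Hb.
  assert (Hb1 : exp (- ((u - ti) * l)) <= 1) by (rewrite <- exp_0; apply exp_le; nra).
  assert (Hlt : (u - ti) * l <= l * tau) by nra.
  set (Bv := exp (- ((u - ti) * l))) in *.
  assert (HBv : 0 < Bv) by apply exp_pos.
  assert (0 <= A * (1 - Bv)) by (apply Rmult_le_pos; lra).
  assert (A * (1 - Bv) <= A * (l * tau)) by (apply Rmult_le_compat_l; lra).
  assert (A * (1 - Bv) <= A * 1) by (apply Rmult_le_compat_l; lra).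
  unfold Rmin; destruct Rle_dec; split; nra.
Qed.

Lemma prod_exp tm u v l : 0 < l -> u <= tm -> v <= tm ->
  exp (- (tm - u) * l) * exp (- (tm - v) * l) <= exp (- (l * (tm - v)) / 2) * exp (- (l * Rabs (u - v)) / 2).
Proof.
  intros Hl Hu Hv. rewrite <- !exp_plus. apply exp_le.
  unfold Rabs; destruct Rcase_abs; nra.
Qed.

Lemma kernel_bound H delta s : 1/2 < H < 1 -> 0 < delta ->
  0 <= phi H s * cutoff delta s <= H * (2 * H - 1) * Qf delta (2 * H - 2) s.
Proof.
  intros HH Hd. unfold phi, cutoff, Qf.
  assert (0 < H * (2 * H - 1)) by nra.
  destruct (Rle_dec delta (Rabs s)).
  - rewrite Mx_eq_abs by auto. pose proof (Rpower_pos (Rabs s) (2 * H - 2)). nra.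
  - pose proof (Rpower_pos (Mx delta s) (2 * H - 2)). nra.
Qed.

Lemma term_bound Au Av hu hv Ev Eab K Q a c Hc :
  0 <= Au <= c * hu -> 0 <= Av <= c * hv -> 0 <= c -> 0 <= hu -> 0 <= hv ->
  hu * hv <= Ev * Eab -> 0 <= K <= Hc * Q ->
  Au * Av * (a * a) * K <= a * a * c * c * Hc * Ev * (Eab * Q).
Proof.
  intros [Hu1 Hu2] [Hv1 Hv2] Hc0 Hhu Hhv Hh [HK1 HK2].
  assert (X1 : Au * Av <= (c * hu) * (c * hv)) by (apply Rmult_le_compat; lra).
  assert (X2 : (c * hu) * (c * hv) <= c * c * (Ev * Eab)).
  { replace ((c * hu) * (c * hv)) with (c * c * (hu * hv)) by ring. apply Rmult_le_compat_l; nra. }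
  assert (Ha : 0 <= a * a) by nra.
  assert (X3 : Au * Av * (a * a) <= c * c * (Ev * Eab) * (a * a)) by (apply Rmult_le_compat_r; lra).
  assert (X4 : Au * Av * (a * a) * K <= c * c * (Ev * Eab) * (a * a) * (Hc * Q)).
  { apply Rmult_le_compat; try lra. apply Rmult_le_pos; [|lra]. apply Rmult_le_pos; lra. }
  replace (a * a * c * c * Hc * Ev * (Eab * Q)) with (c * c * (Ev * Eab) * (a * a) * (Hc * Q)) by ring.
  exact X4.
Qed.

Lemma final_ineq l tau H beta : 0 < l -> 0 < tau -> 1/2 < H < 1 -> 1 - 2 * H < beta <= 1 ->
  Rmin 1 (l * tau) * Rmin 1 (l * tau) * Rpower (/ l) (2 * H - 2 + 1) * / l <=
  Rpower tau (2 * H + beta - 1) * (Rpower l ((beta - 1) / 2) * Rpower l ((beta - 1) / 2)).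
Proof.
  intros Hl Ht HH Hb.
  assert (Hm : Rmin 1 (l * tau) = exp (Rmin 0 (ln l + ln tau))).
  { rewrite <- ln_mult by auto. unfold Rmin. destruct Rle_dec as [H1|H1]; destruct Rle_dec as [H2|H2].
    - rewrite exp_0. reflexivity.
    - exfalso. apply H2. rewrite <- ln_1. apply ln_le; lra.
    - exfalso. assert (ln (l * tau) < ln 1) by (apply ln_increasing; nra). rewrite ln_1 in *. lra.
    - rewrite exp_ln by nra. reflexivity. }
  assert (Hi : / l = exp (- ln l)) by (rewrite <- ln_Rinv, exp_ln by (auto; apply Rinv_0_lt_compat; auto); reflexivity).
  rewrite Hm. rewrite Hi at 2. unfold Rpower. rewrite ln_Rinv by auto.
  rewrite <- !exp_plus. apply exp_le.
  set (L := ln l). set (T := ln tau).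
  assert (Hmin : 2 * Rmin 0 (L + T) <= (2 * H + beta - 1) * (L + T)).
  { unfold Rmin; destruct Rle_dec; nra. }
  nra.
Qed.

Lemma RInt_dom (f g : R -> R) a b : a <= b -> ex_RInt g a b ->
  (forall x, a < x < b -> f x <= g x) -> (forall x, a < x < b -> 0 <= g x) ->
  Defs.RInt f a b <= CI g a b.
Proof.
  intros Hab Hg Hfg Hg0. unfold Defs.RInt.
  destruct (excluded_middle_informative _) as [h|h].
  - set (pr := epsilon h (fun _ => True)).
    rewrite (RInt_Reals g a b (ex_RInt_Reals_0 _ _ _ Hg)).
    apply RiemannInt_P19; auto.
  - apply RInt_ge_0; auto.
Qed.

Lemma exc (g : R -> R) a b : (forall x, continuous g x) -> ex_RInt g a b.
Proof. intros. apply (@ex_RInt_continuous R_CompleteNormedModule). intros; auto. Qed.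

Lemma cont_rsum (f : nat -> R -> R) n x : (forall k, continuous (f k) x) ->
  continuous (fun y => rsum (fun k => f k y) n) x.
Proof.
  intros Hf. induction n; simpl. apply cR_const.
  apply cR_plus; auto.
Qed.

Lemma ex_rsum (f : nat -> R -> R) n a b : (forall k, ex_RInt (f k) a b) ->
  ex_RInt (fun y => rsum (fun k => f k y) n) a b.
Proof.
  intros Hf. induction n; simpl.
  - apply (ex_RInt_const (V:=R_NormedModule)).
  - apply (ex_RInt_plus (V:=R_NormedModule)); auto.
Qed.

Lemma CI_rsum (f : nat -> R -> R) n a b : (forall k, ex_RInt (f k) a b) ->
  CI (fun y => rsum (fun k => f k y) n) a b = rsum (fun k => CI (f k) a b) n.
Proof.
  intros Hf. induction n; simpl.
  - rewrite CI_const_R. ring.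
  - rewrite <- IHn. exact (RInt_plus _ _ a b (ex_rsum f n a b Hf) (Hf n)).
Qed.

Lemma blocks (g : R -> R) (t : nat -> R) n : (forall x, continuous g x) ->
  rsum (fun j => CI g (t j) (t (S j))) n = CI g (t O) (t n).
Proof.
  intros Hg. induction n; simpl.
  - rewrite (RInt_point (V:=R_CompleteNormedModule)). reflexivity.
  - rewrite IHn. rewrite (CI_chasles g (t O) (t n) (t (S n))) by (apply exc; auto). reflexivity.
Qed.

Lemma rsum_nonneg (f : nat -> R) n : (forall k, (k < n)%nat -> 0 <= f k) -> 0 <= rsum f n.
Proof.
  intros Hf. induction n; simpl. lra.
  assert (0 <= rsum f n) by (apply IHn; intros; apply Hf; lia). pose proof (Hf n ltac:(lia)). lra.
Qed.

Lemma rsum_mult_r (f : nat -> R) c n : rsum f n * c = rsum (fun k => f k * c) n.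
Proof. induction n; simpl. ring. rewrite <- IHn. ring. Qed.

Lemma CI_shift l d p v a b : 0 < d ->
  CI (fun x => Rf l d p (x - v)) a b = Psi l d p (b - v) - Psi l d p (a - v).
Proof.
  intros Hd. rewrite Psi_diff by auto.
  pose proof (RInt_comp_lin (Rf l d p) 1 (- v) a b (exRf l d p _ _ Hd)) as Hc.
  replace (1 * a + - v) with (a - v) in Hc by ring.
  replace (1 * b + - v) with (b - v) in Hc by ring.
  rewrite <- Hc. apply RInt_ext. intros x _.
  replace (1 * x + - v) with (x - v) by ring.
  rewrite (scal_one (V:=R_ModuleSpace)). reflexivity.
Qed.

Lemma Rf_shift_cont l d p v x : 0 < d -> continuous (fun u => Rf l d p (u - v)) x.
Proof.
  intros Hd. apply cR_comp with (f := fun u => u - v) (g := Rf l d p).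
  apply cR_minus. apply cR_id. apply cR_const. apply Rf_cont; auto.
Qed.

Lemma E_cont l c x : continuous (fun v => exp (- (l * (c - v)) / 2)) x.
Proof.
  apply cR_comp with (f := fun s => - (l * (c - s)) / 2) (g := exp); [|apply continuous_exp].
  apply (continuous_ext (fun s => (- (l * (c - s))) * / 2)). { intros; reflexivity. }
  apply cR_mult; [|apply cR_const]. apply cR_opp. apply cR_mult. apply cR_const.
  apply cR_minus. apply cR_const. apply cR_id.
Qed.

Lemma Psi_shift_cont l d p c x : 0 < d -> continuous (fun v => Psi l d p (c - v)) x.
Proof.
  intros Hd. apply cR_comp with (f := fun v => c - v) (g := Psi l d p).
  apply cR_minus. apply cR_const. apply cR_id. apply Psi_cont; auto.
Qed.

Theorem mainTheorem10 (Vh : Hilbert) (Sd : SpectralData Vh) (H beta T : R) :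
  1 / 2 < H < 1 -> 1 - 2 * H < beta <= 1 -> 0 < T ->
  exists C : R,
    forall (N M m : nat) (x : Vh),
      (1 <= m <= M)%nat ->
      let tau := T / INR M in
      let t := fun i : nat => INR i * tau in
      let y := PN Sd N x in
      forall delta : R, 0 < delta ->
        rsum (fun i => rsum (fun j =>
          RInt (fun v =>
            RInt (fun u =>
              inner (SN Sd N (t m) u (t i) y) (SN Sd N (t m) v (t j) y)
                * phi H (u - v) * cutoff delta (u - v))
              (t i) (t (S i)))
            (t j) (t (S j))) m) m
        <= C * Rpower tau (2 * H + beta - 1)
             * inner (AN_pow Sd N ((beta - 1) / 2) y) (AN_pow Sd N ((beta - 1) / 2) y).
Proof.
  intros HH Hb HT.
  exists (H * (2 * H - 1) * 4 * (3 + / (2 * H - 2 + 1))).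
  intros N M m x Hm tau t y delta Hd.
  assert (Htau : 0 < tau).
  { unfold tau. apply Rdiv_lt_0_compat; auto. apply lt_0_INR. lia. }
  assert (HtS : forall i, t (S i) = t i + tau) by (intros; unfold t; rewrite S_INR; ring).
  assert (Ht0 : t O = 0) by (unfold t; simpl; ring).
  assert (Htle : forall i j, (i <= j)%nat -> t i <= t j).
  { intros i j Hij. unfold t. apply Rmult_le_compat_r; [lra|]. apply le_INR; auto. }
  pose (a k := inner y (e Sd k)).
  pose (c k := Rmin 1 (lam Sd k * tau)).
  pose (Hc := H * (2 * H - 1)).
  pose (p := 2 * H - 2).
  pose (W k := a k * a k * c k * c k * Hc).
  pose (E k v := exp (- (lam Sd k * (t m - v)) / 2)).
  pose (Ps k := Psi (lam Sd k) delta p).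
  pose (G i v := rsum (fun k => W k * E k v * (Ps k (t (S i) - v) - Ps k (t i - v))) N).
  assert (Hl : forall k, 0 < lam Sd k) by apply lam_pos.
  assert (Hc0 : 0 < Hc) by (unfold Hc; apply Rmult_lt_0_compat; lra).
  assert (Hck : forall k, 0 <= c k) by (intros k; unfold c, Rmin; destruct Rle_dec; [lra|]; apply Rlt_le, Rmult_lt_0_compat; auto).
  assert (HW : forall k, 0 <= W k).
  { intros k. unfold W. pose proof (Hck k). assert (0 <= a k * a k) by (pose proof (Rle_0_sqr (a k)); unfold Rsqr in *; lra).
    apply Rmult_le_pos; [|lra]. apply Rmult_le_pos; [|lra]. apply Rmult_le_pos; lra. }
  assert (HE : forall k v, 0 < E k v) by (intros; apply exp_pos).
  assert (Hp : -1 < p < 0) by (unfold p; lra).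
  assert (HGc : forall i v, continuous (G i) v).
  { intros i v. unfold G. apply cont_rsum. intros k.
    apply (cR_mult (fun v => W k * E k v) (fun v => Ps k (t (S i) - v) - Ps k (t i - v))).
    apply (cR_mult (fun _ => W k) (E k)). apply cR_const. unfold E; apply E_cont.
    apply (cR_minus (fun v => Ps k (t (S i) - v)) (fun v => Ps k (t i - v))); unfold Ps; apply Psi_shift_cont; exact Hd. }
  assert (HG0 : forall i v, 0 <= G i v).
  { intros i v. unfold G. apply rsum_nonneg. intros k _.
    apply Rmult_le_pos. apply Rmult_le_pos; [apply HW|left; apply HE].
    unfold Ps. rewrite Psi_diff by auto. apply RInt_ge_0.
    rewrite HtS; lra. apply exRf; auto. intros; left; apply Rf_pos. }

  assert (Step1 : forall i j v, (i < m)%nat -> (j < m)%nat -> t j <= v <= t (S j) ->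
    RInt (fun u => inner (SN Sd N (t m) u (t i) y) (SN Sd N (t m) v (t j) y)
                * phi H (u - v) * cutoff delta (u - v)) (t i) (t (S i)) <= G i v).
  { intros i j v Hi Hj Hv.
    pose (g u := rsum (fun k => W k * E k v * Rf (lam Sd k) delta p (u - v)) N).
    assert (Hgc : forall u, continuous g u).
    { intros u. unfold g. apply cont_rsum. intros k.
      apply (cR_mult (fun _ => W k * E k v) (fun u => Rf (lam Sd k) delta p (u - v))).
      apply cR_const. apply Rf_shift_cont; exact Hd. }
    assert (Hg : CI g (t i) (t (S i)) = G i v).
    { unfold g, G. rewrite CI_rsum.
      2:{ intros k. apply exc. intros u.
          apply (cR_mult (fun _ => W k * E k v) (fun u => Rf (lam Sd k) delta p (u - v))).
          apply cR_const. apply Rf_shift_cont; exact Hd. }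
      apply rsum_ext_lt. intros k _.
      rewrite (CI_scal_R (fun u => Rf (lam Sd k) delta p (u - v))).
      2:{ apply exc. intros u. apply Rf_shift_cont; exact Hd. }
      rewrite CI_shift by exact Hd. reflexivity. }
    rewrite <- Hg.
    assert (Hti : t i <= t (S i)) by (rewrite HtS; lra).
    assert (HtSi : t (S i) <= t m) by (apply Htle; lia).
    assert (HtSj : t (S j) <= t m) by (apply Htle; lia).
    apply RInt_dom.
    - exact Hti.
    - apply exc; exact Hgc.
    - intros u Hu. rewrite inner_SN. rewrite !rsum_mult_r. unfold g.
      apply rsum_le. intros k Hk.
      rewrite (Rmult_assoc _ (phi H (u - v)) (cutoff delta (u - v))).
      assert (Hu' : t i <= u <= t i + tau) by (rewrite <- HtS; lra).
      assert (Hv' : t j <= v <= t j + tau) by (rewrite <- HtS; lra).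
      pose proof (g_bounds (t m) (t i) u (lam Sd k) tau (Hl k) Htau Hu' ltac:(lra)) as G1.
      pose proof (g_bounds (t m) (t j) v (lam Sd k) tau (Hl k) Htau Hv' ltac:(lra)) as G2.
      pose proof (prod_exp (t m) u v (lam Sd k) (Hl k) ltac:(lra) ltac:(lra)) as PE.
      pose proof (kernel_bound H delta (u - v) HH Hd) as KB.
      exact (term_bound _ _ _ _ _ _ _ _ (a k) (c k) Hc G1 G2 (Hck k)
               (Rlt_le _ _ (exp_pos _)) (Rlt_le _ _ (exp_pos _)) PE KB).
    - intros u Hu. unfold g. apply rsum_nonneg. intros k _.
      apply Rmult_le_pos. apply Rmult_le_pos; [apply HW|left; apply HE]. left; apply Rf_pos. }
  assert (Step2 : forall i j, (i < m)%nat -> (j < m)%nat ->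
    RInt (fun v => RInt (fun u => inner (SN Sd N (t m) u (t i) y) (SN Sd N (t m) v (t j) y)
                * phi H (u - v) * cutoff delta (u - v)) (t i) (t (S i))) (t j) (t (S j))
    <= CI (G i) (t j) (t (S j))).
  { intros i j Hi Hj. apply RInt_dom.
    - rewrite HtS; lra.
    - apply exc; apply HGc.
    - intros v Hv. apply Step1; auto. lra.
    - intros v _. apply HG0. }

  apply Rle_trans with (rsum (fun i => rsum (fun j => CI (G i) (t j) (t (S j))) m) m).
  { apply rsum_le; intros i Hi; apply rsum_le; intros j Hj; apply Step2; auto. }
  rewrite (rsum_ext_lt _ (fun i => CI (G i) (t O) (t m))) by (intros; apply blocks; apply HGc).
  rewrite <- (CI_rsum G) by (intros; apply exc; apply HGc).
  pose (B k := Bnd (lam Sd k) p).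
  assert (HB : forall k, 0 <= B k).
  { intros k. unfold B, Bnd. apply Rmult_le_pos. left; apply Rpower_pos.
    assert (0 < / (p + 1)) by (apply Rinv_0_lt_compat; lra). lra. }
  assert (HEc : forall k v, continuous (fun v => W k * (2 * B k) * E k v) v).
  { intros k v. apply (cR_mult (fun _ => W k * (2 * B k)) (E k)). apply cR_const. unfold E; apply E_cont. }
  assert (Htm : 0 <= t m) by (rewrite <- Ht0; apply Htle; lia).
  apply Rle_trans with (CI (fun v => rsum (fun k => W k * (2 * B k) * E k v) N) (t O) (t m)).
  { apply RInt_le.
    - apply Htle; lia.
    - apply exc; intros v; apply cont_rsum; intros i; apply HGc.
    - apply exc; intros v; apply cont_rsum; intros k; apply HEc.
    - intros v Hv. rewrite Ht0 in Hv. unfold G. rewrite rsum_swap. apply rsum_le. intros k Hk.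
      rewrite rsum_scal.
      pose proof (rsum_telescope (fun i => Ps k (t i - v)) m) as TT. cbv beta in TT.
      rewrite TT. rewrite Ht0. replace (0 - v) with (- v) by ring. unfold Ps. rewrite Psi_odd by auto.
      pose proof (Psi_bound (lam Sd k) delta p (t m - v) (Hl k) Hd Hp ltac:(lra)).
      pose proof (Psi_bound (lam Sd k) delta p v (Hl k) Hd Hp ltac:(lra)).
      replace (W k * (2 * B k) * E k v) with ((W k * E k v) * (2 * B k)) by ring.
      apply Rmult_le_compat_l. apply Rmult_le_pos; [apply HW|left; apply HE].
      unfold B. lra. }
  rewrite CI_rsum by (intros k; apply exc; intros; apply HEc).
  apply Rle_trans with (rsum (fun k => W k * (2 * B k) * (2 / lam Sd k)) N).
  { apply rsum_le; intros k Hk. rewrite (CI_scal_R (E k)) by (apply exc; intros; unfold E; apply E_cont).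
    apply Rmult_le_compat_l. apply Rmult_le_pos; [apply HW| pose proof (HB k); lra].
    unfold E. apply exp_int2; auto. split; [apply Htle; lia | lra]. }
  rewrite inner_ANpow. rewrite <- rsum_scal. apply rsum_le. intros k Hk.
  pose proof (final_ineq (lam Sd k) tau H beta (Hl k) Htau HH Hb) as FI.
  assert (Hq : 0 < / (2 * H - 2 + 1)) by (apply Rinv_0_lt_compat; lra).
  assert (HK : 0 <= a k * a k * Hc * 4 * (3 + / (2 * H - 2 + 1))).
  { assert (0 <= a k * a k) by (pose proof (Rle_0_sqr (a k)); unfold Rsqr in *; lra).
    apply Rmult_le_pos; [|lra]. apply Rmult_le_pos; [|lra]. apply Rmult_le_pos; lra. }
  pose proof (Hl k) as Hlk.
  unfold W, B, Bnd, p.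
  replace (a k * a k * c k * c k * Hc * (2 * (Rpower (/ lam Sd k) (2 * H - 2 + 1) * (3 + / (2 * H - 2 + 1)))) * (2 / lam Sd k))
    with ((a k * a k * Hc * 4 * (3 + / (2 * H - 2 + 1))) *
          (c k * c k * Rpower (/ lam Sd k) (2 * H - 2 + 1) * / lam Sd k)) by (unfold Rdiv; ring).
  replace (H * (2 * H - 1) * 4 * (3 + / (2 * H - 2 + 1)) * Rpower tau (2 * H + beta - 1) *
     (Rpower (lam Sd k) ((beta - 1) / 2) * inner y (e Sd k) * (Rpower (lam Sd k) ((beta - 1) / 2) * inner y (e Sd k))))
    with ((a k * a k * Hc * 4 * (3 + / (2 * H - 2 + 1))) *
          (Rpower tau (2 * H + beta - 1) * (Rpower (lam Sd k) ((beta - 1) / 2) * Rpower (lam Sd k) ((beta - 1) / 2))))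
    by (unfold a, Hc; ring).
  apply Rmult_le_compat_l; auto.
Qed.
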